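(* Let $H$ be a separable complex Hilbert space, $\{v_j\}_{j\in\mathbb N}$ an orthonormal basis of $H$, $\{w_j\}_{j\in\mathbb N}$ a set of unit vectors in $H$, and $N\ge1$. Let $p_N'$ be the orthogonal projection onto $H_N'=\operatorname{span}\{v_1,\dots,v_N\}$, let $\mathcal B_N=\{w_j\}_{1\le j\le N}\cup\{v_j\}_{j\ge N+1}$ and $\tilde{\mathcal B}_N=\{p_N'(w_1),\dots,p_N'(w_N)\}\cup\{v_j\}_{j\ge N+1}$. Then $\mathcal B_N$ is a Riesz basis of $H$ if and only if $\tilde{\mathcal B}_N$ is a Riesz basis of $H$.
   Context: A Riesz basis is a sequence $\{u_j\}$ such that there are $0<A\le B<\infty$ with $A\|f\|^2\le\sum_j|\langle f,u_j\rangle|^2\le B\|f\|^2$ for all $f\in H$ and $A\sum|a_j|^2\le\|\sum a_ju_j\|^2\le B\sum|a_j|^2$ for all finite coefficient sequences. *)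

(* Defs.v *)
From HB Require Import structures.
From mathcomp Require Import all_boot all_order all_algebra.
From mathcomp Require Import complex.
From mathcomp Require Import all_classical all_reals all_analysis.
Set Implicit Arguments. Unset Strict Implicit. Unset Printing Implicit Defensive.
Import Order.TTheory GRing.Theory Num.Theory.
Local Open Scope ring_scope.

Section Hilbert.
Variables (R : realType) (V : lmodType R[i]) (ip : V -> V -> R[i]).

Definition csq (z : R[i]) : R := complex.Re z ^+ 2 + complex.Im z ^+ 2.

Definition nsq (x : V) : R := complex.Re (ip x x).
Definition hnorm (x : V) : R := Num.sqrt (nsq x).

Definition is_inner_product : Prop :=
  [/\ (forall (a : R[i]) (x y z : V), ip (a *: x + y) z = a * ip x z + ip y z),
      (forall x y : V, ip y x = conjc (ip x y)),
      (forall x : V, complex.Im (ip x x) = 0 /\ 0 <= complex.Re (ip x x))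
    & (forall x : V, ip x x = 0 -> x = 0)].

Definition hcomplete : Prop :=
  forall u : nat -> V,
    (forall e : R, 0 < e -> exists M : nat, forall m n : nat,
        (M <= m)%N -> (M <= n)%N -> hnorm (u m - u n) < e) ->
    exists x : V, forall e : R, 0 < e -> exists M : nat, forall n : nat,
        (M <= n)%N -> hnorm (u n - x) < e.

Definition hilbert_space : Prop := is_inner_product /\ hcomplete.

Definition orthonormal_basis (v : nat -> V) : Prop :=
  (forall i j : nat, ip (v i) (v j) = (i == j)%:R) /\
  (forall f : V, (forall j, ip f (v j) = 0) -> f = 0).

Definition riesz_basis (u : nat -> V) : Prop :=
  exists A B : R, [/\ 0 < A, A <= B,
    (forall f : V,
        ((A * nsq f)%:E <= \sum_(0 <= j <oo) (csq (ip f (u j)))%:E)%E /\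
        (\sum_(0 <= j <oo) (csq (ip f (u j)))%:E <= (B * nsq f)%:E)%E)
  & (forall (n : nat) (a : nat -> R[i]),
        A * (\sum_(j < n) csq (a j)) <= nsq (\sum_(j < n) a j *: u j) /\
        nsq (\sum_(j < n) a j *: u j) <= B * (\sum_(j < n) csq (a j)))].

(* orthogonal projection onto span{v_0, ..., v_(N-1)} (v orthonormal) *)
Definition proj_span (v : nat -> V) (N : nat) (x : V) : V :=
  \sum_(i < N) ip x (v i) *: v i.

(* B_N  = {w_0..w_(N-1)} followed by {v_j}_(j >= N) *)
Definition BN (v w : nat -> V) (N : nat) (j : nat) : V :=
  if (j < N)%N then w j else v j.

(* B~_N = {p'_N(w_0)..p'_N(w_(N-1))} followed by {v_j}_(j >= N) *)
Definition BNt (v w : nat -> V) (N : nat) (j : nat) : V :=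
  if (j < N)%N then proj_span v N (w j) else v j.

End Hilbert.

(* Main.v *)
Require Import Defs.
From HB Require Import structures.
From mathcomp Require Import all_boot all_order all_algebra.
From mathcomp Require Import complex.
From mathcomp Require Import all_classical all_reals all_analysis.
From mathcomp Require Import ring lra.
Import Order.TTheory GRing.Theory Num.Theory.
Local Open Scope ring_scope.
Set Implicit Arguments. Unset Strict Implicit.

Section Cplx.
Variable R : realType.
Implicit Types a b : R[i].

Lemma csq_ge0 a : 0 <= csq a.
Proof. case: a => a1 a2; rewrite /csq /=; by rewrite addr_ge0 // sqr_ge0. Qed.

Lemma csqM a b : csq (a * b) = csq a * csq b.
Proof. case: a => a1 a2; case: b => b1 b2; rewrite /csq /=. ring. Qed.

Lemma csqD2 a b : csq (a + b) <= 2 * csq a + 2 * csq b.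
Proof. case: a => a1 a2; case: b => b1 b2; rewrite /csq /=.
have h1 := sqr_ge0 (a1 - b1). have h2 := sqr_ge0 (a2 - b2).
rewrite !expr2 in h1 h2 *. nra. Qed.

Lemma csqN a : csq (- a) = csq a.
Proof. case: a => a1 a2; rewrite /csq /=. ring. Qed.

Lemma csqJ a : csq (conjc a) = csq a.
Proof. case: a => a1 a2; rewrite /csq /=. ring. Qed.

Lemma csq0 : csq (0 : R[i]) = 0.
Proof. by rewrite /csq /= expr0n /= addr0. Qed.

Lemma csq_eq0 a : csq a = 0 -> a = 0.
Proof. case: a => a1 a2; rewrite /csq /= => h.
have h1 := sqr_ge0 a1; have h2 := sqr_ge0 a2.
have e1 : a1 ^+ 2 = 0 by apply/eqP; rewrite eq_le h1 andbT; rewrite -h lerDl.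
have e2 : a2 ^+ 2 = 0 by apply/eqP; rewrite eq_le h2 andbT; rewrite -h lerDr.
by move: e1 e2 => /eqP; rewrite sqrf_eq0 => /eqP -> /eqP; rewrite sqrf_eq0 => /eqP ->.
Qed.

Lemma ReJM a : complex.Re (conjc a * a) = csq a.
Proof. case: a => a1 a2; rewrite /csq /=. ring. Qed.

Lemma ReD a b : complex.Re (a + b) = complex.Re a + complex.Re b.
Proof. by case: a => ??; case: b. Qed.

Lemma Re0 : complex.Re (0 : R[i]) = 0. Proof. by []. Qed.

Lemma Re_sum n (F : 'I_n -> R[i]) : complex.Re (\sum_(i < n) F i) = \sum_(i < n) complex.Re (F i).
Proof. exact: (big_morph _ ReD Re0). Qed.

Lemma ReMreal a b : complex.Im b = 0 -> complex.Re (a * b) = complex.Re a * complex.Re b.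
Proof. case: a => a1 a2; case: b => b1 b2 /= ->. ring. Qed.

Lemma csq_sum_le n (F : 'I_n -> R[i]) : csq (\sum_(i < n) F i) <= 2 ^+ n * \sum_(i < n) csq (F i).
Proof.
elim: n F => [|n IH] F; first by rewrite !big_ord0 csq0 mulr0.
rewrite !big_ord_recr /=.
apply: le_trans (csqD2 _ _) _.
have := IH (fun i => F (widen_ord (leqnSn n) i)).
have := csq_ge0 (F ord_max). have := csq_ge0 (F ord_max).
set s := \sum_(i < n) _. set t := \sum_(i < n) csq _.
move=> h0 _ h; rewrite exprS.
have p : 1 <= 2 ^+ n :> R by rewrite exprn_ege1 // ler1n.
nra.
Qed.

End Cplx.


Section IP.
Variables (R : realType) (V : lmodType R[i]) (ip : V -> V -> R[i]).
Hypothesis Hip : is_inner_product ip.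

Lemma ipDl x y z : ip (x + y) z = ip x z + ip y z.
Proof. by case: Hip => h _ _ _; rewrite -[x]scale1r h mul1r scale1r. Qed.

Lemma ip0l z : ip 0 z = 0.
Proof. by apply: (addrI (ip 0 z)); rewrite -ipDl !addr0. Qed.

Lemma ipZl a x z : ip (a *: x) z = a * ip x z.
Proof. by case: Hip => h _ _ _; rewrite -[a *: x]addr0 h ip0l addr0. Qed.

Lemma ipC x y : ip y x = conjc (ip x y).
Proof. by case: Hip. Qed.

Lemma ipDr x y z : ip z (x + y) = ip z x + ip z y.
Proof. by rewrite !(ipC _ z) ipDl rmorphD. Qed.

Lemma ipZr a x z : ip z (a *: x) = conjc a * ip z x.
Proof. by rewrite !(ipC _ z) ipZl rmorphM. Qed.

Lemma ip0r z : ip z 0 = 0.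
Proof. by rewrite ipC ip0l rmorph0. Qed.

Lemma ipNl x z : ip (- x) z = - ip x z.
Proof. by rewrite -scaleN1r ipZl mulN1r. Qed.

Lemma ipNr x z : ip z (- x) = - ip z x.
Proof. by rewrite -scaleN1r ipZr rmorphN rmorph1 mulN1r. Qed.

Lemma ipBl x y z : ip (x - y) z = ip x z - ip y z.
Proof. by rewrite ipDl ipNl. Qed.

Lemma ipBr x y z : ip z (x - y) = ip z x - ip z y.
Proof. by rewrite ipDr ipNr. Qed.

Lemma ip_suml n (F : 'I_n -> V) z : ip (\sum_(i < n) F i) z = \sum_(i < n) ip (F i) z.
Proof. exact: (big_morph (ip^~ z) (fun x y => ipDl x y z) (ip0l z)). Qed.

Lemma ip_sumr n (F : 'I_n -> V) z : ip z (\sum_(i < n) F i) = \sum_(i < n) ip z (F i).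
Proof. exact: (big_morph (ip z) (fun x y => ipDr x y z) (ip0r z)). Qed.

Lemma ip_self x : ip x x = ((nsq ip x)%:C)%C.
Proof. case: Hip => _ _ h _; case: (h x) => hi _.
by rewrite /nsq; move: hi; case: (ip x x) => a b /= ->. Qed.

Lemma nsq_ge0 x : 0 <= nsq ip x.
Proof. by case: Hip => _ _ h _; case: (h x). Qed.

Lemma nsq_eq0 x : nsq ip x = 0 -> x = 0.
Proof. move=> e; case: Hip => _ _ _ h; apply: h; by rewrite ip_self e. Qed.

Lemma ip_orth x y : ip x y = 0 -> ip y x = 0.
Proof. by move=> h; rewrite ipC h rmorph0. Qed.

Lemma nsq_pyth x y : ip x y = 0 -> nsq ip (x + y) = nsq ip x + nsq ip y.
Proof. move=> h; have h' := ip_orth h.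
by rewrite /nsq ipDl !ipDr h h' addr0 add0r ReD. Qed.

Lemma nsqZ a x : nsq ip (a *: x) = csq a * nsq ip x.
Proof. rewrite /nsq ipZl ipZr mulrA [a * _]mulrC ReMreal; first by rewrite ReJM.
by rewrite ip_self. Qed.

Lemma nsqN x : nsq ip (- x) = nsq ip x.
Proof. by rewrite -scaleN1r nsqZ csqN /csq /= expr0n /= addr0 expr1n mul1r. Qed.

Lemma nsqD2 x y : nsq ip (x + y) <= 2 * nsq ip x + 2 * nsq ip y.
Proof.
have e : nsq ip (x + y) + nsq ip (x - y) = 2 * nsq ip x + 2 * nsq ip y.
  rewrite /nsq !ipDl !ipDr !ipNl !ipNr.
  case: (ip x x) => ??; case: (ip x y) => ??; case: (ip y x) => ??; case: (ip y y) => ??.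
  rewrite /=; ring.
have := nsq_ge0 (x - y); rewrite -e; lra.
Qed.

Lemma nsq_sum_le n (F : 'I_n -> V) : nsq ip (\sum_(i < n) F i) <= 2 ^+ n * \sum_(i < n) nsq ip (F i).
Proof.
elim: n F => [|n IH] F; first by rewrite !big_ord0 /nsq ip0l mulr0.
rewrite !big_ord_recr /=.
apply: le_trans (nsqD2 _ _) _.
have := IH (fun i => F (widen_ord (leqnSn n) i)).
have := nsq_ge0 (F ord_max).
set s := \sum_(i < n) _. set t := \sum_(i < n) nsq _ _.
move=> h0 h; rewrite exprS.
have p : 1 <= 2 ^+ n :> R by rewrite exprn_ege1 // ler1n.
nra.
Qed.

Lemma sum_delta n (d : nat -> R[i]) k :
  \sum_(i < n) d i * ((i : nat) == k)%:R = if (k < n)%N then d k else 0.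
Proof.
case: ifP => hk.
  rewrite (bigD1 (Ordinal hk)) //= eqxx mulr1 big1 ?addr0 // => i hi.
  have : (i : nat) != k by apply: contra hi => /eqP ee; apply/eqP/val_inj.
  by move/negbTE => ->; rewrite mulr0.
rewrite big1 // => i _; have : (i : nat) != k.
  by apply/eqP => e; move: (ltn_ord i); rewrite e hk.
by move/negbTE => ->; rewrite mulr0.
Qed.

Variables (e : nat -> V) (n : nat).
Hypothesis Hon : forall i j, (i < n)%N -> (j < n)%N -> ip (e i) (e j) = (i == j)%:R.

Lemma coord_on (d : 'I_n -> R[i]) (k : 'I_n) :
  ip (\sum_(i < n) d i *: e i) (e k) = d k.
Proof.
rewrite ip_suml.
rewrite (eq_bigr (fun i : 'I_n => d i * ((i : nat) == k)%:R)); last first.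
  by move=> i _; rewrite ipZl Hon.
rewrite (bigD1 k) //= eqxx mulr1 big1 ?addr0 // => i hi.
have : (i : nat) != k by apply: contra hi => /eqP ee; apply/eqP/val_inj.
by move/negbTE => ->; rewrite mulr0.
Qed.

Lemma nsq_comb (d : 'I_n -> R[i]) :
  nsq ip (\sum_(i < n) d i *: e i) = \sum_(i < n) csq (d i).
Proof.
rewrite /nsq ip_sumr Re_sum; apply: eq_bigr => i _.
by rewrite ipZr coord_on ReJM.
Qed.

Lemma bessel f : \sum_(k < n) csq (ip f (e k)) <= nsq ip f.
Proof.
set p := \sum_(k < n) ip f (e k) *: e k.
have hr : forall k : 'I_n, ip (f - p) (e k) = 0.
  by move=> k; rewrite ipBl (coord_on (fun k : 'I_n => ip f (e k))) subrr.
have hrp : ip (f - p) p = 0.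
  rewrite ip_sumr big1 // => k _; by rewrite ipZr hr mulr0.
have : nsq ip f = nsq ip (f - p) + nsq ip p by rewrite -nsq_pyth // subrK.
rewrite (nsq_comb (fun k : 'I_n => ip f (e k))) => ->; rewrite lerDr; exact: nsq_ge0.
Qed.

End IP.


Section Mx.
Variables (R : realType) (N : nat).

Lemma inj_unit (M : 'M[R[i]]_N) :
  (forall y : 'cV_N, M *m y = 0 -> y = 0) -> M \in unitmx.
Proof.
move=> H; rewrite -unitmx_tr -row_free_unit -kermx_eq0.
apply/eqP/matrixP => i j; rewrite mxE.
have h : (row i (kermx M^T))^T = 0.
  apply: H; rewrite -[M in M *m _]trmxK -trmx_mul -row_mul mulmx_ker.
  by rewrite row0 trmx0.
have := congr1 (fun A : 'cV[R[i]]_N => A j 0) h; rewrite !mxE => ->; by [].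
Qed.

Lemma single_le (I : finType) (F : I -> R) (k : I) :
  (forall i, 0 <= F i) -> F k <= \sum_i F i.
Proof.
move=> h; rewrite (bigD1 k) //= lerDl; apply: sumr_ge0 => i _; exact: h.
Qed.

Lemma Mlow (M : 'M[R[i]]_N) : M \in unitmx ->
  exists c : R, 0 < c /\ forall a : 'rV_N,
    c * \sum_i csq (a 0 i) <= \sum_j csq ((a *m M) 0 j).
Proof.
move=> hM; set Mi := invmx M.
set K := \sum_j \sum_i csq (Mi j i).
have K0 : 0 <= K by apply: sumr_ge0 => j _; apply: sumr_ge0 => i _; exact: csq_ge0.
set L := 2 ^+ N * K + 1.
have L1 : 1 <= L by rewrite lerDr mulr_ge0 // exprn_ge0.
have L0 : 0 < L := lt_le_trans ltr01 L1.
exists L^-1; split; first by rewrite invr_gt0.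
move=> a; set b := a *m M.
have ea : a = b *m Mi by rewrite /b /Mi mulmxK.
have hb0 : 0 <= \sum_j csq (b 0 j) by apply: sumr_ge0 => j _; exact: csq_ge0.
suff : \sum_i csq (a 0 i) <= 2 ^+ N * K * \sum_j csq (b 0 j).
  move=> h; rewrite ler_pdivrMl // mulrDl mul1r.
  by apply: le_trans h _; rewrite lerDl.
have step : forall i, csq (a 0 i) <= 2 ^+ N * \sum_j csq (b 0 j) * csq (Mi j i).
  move=> i; rewrite ea mxE.
  apply: le_trans (@csq_sum_le R N (fun j => b 0 j * Mi j i)) _.
  by rewrite ler_wpM2l ?exprn_ge0 // ler_sum // => j _; rewrite csqM.
apply: le_trans (ler_sum _ (fun i _ => step i)) _.
rewrite -mulr_sumr -mulrA ler_wpM2l ?exprn_ge0 //.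
rewrite exchange_big /= mulrC mulr_suml ler_sum // => j _.
rewrite -mulr_sumr ler_wpM2l ?csq_ge0 //.
apply: (@single_le _ (fun j => \sum_i csq (Mi j i))) => k.
by apply: sumr_ge0 => i _; exact: csq_ge0.
Qed.

Lemma Mlowc (M : 'M[R[i]]_N) : M \in unitmx ->
  exists c : R, 0 < c /\ forall y : 'cV_N,
    c * \sum_i csq (y i 0) <= \sum_j csq ((M *m y) j 0).
Proof.
rewrite -unitmx_tr => /Mlow [c [c0 h]]; exists c; split => // y.
have := h y^T.
have -> : \sum_i csq (y^T 0 i) = \sum_i csq (y i 0) by apply: eq_bigr => i _; rewrite mxE.
have -> : \sum_j csq ((y^T *m M^T) 0 j) = \sum_j csq ((M *m y) j 0).
  by apply: eq_bigr => j _; rewrite -trmx_mul mxE.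
by [].
Qed.

End Mx.


Section Comb.
Variable R : realType.

Definition cmb (p q r : R) := Num.min (r / (r + 2 * q) * p) (r / 2).

Lemma cmb_gt0 p q r : 0 < p -> 0 <= q -> 0 < r -> 0 < cmb p q r.
Proof.
move=> hp hq hr; rewrite /cmb lt_min; apply/andP; split.
  by rewrite mulr_gt0 // divr_gt0 // ltr_wpDr // mulr_ge0.
by rewrite divr_gt0.
Qed.

Lemma comb (Y P p q r u s : R) : 0 <= Y -> p * u - q * s <= Y -> r * s + Y <= P ->
  0 < p -> 0 <= q -> 0 < r -> 0 <= u -> 0 <= s -> cmb p q r * (u + s) <= P.
Proof.
move=> hY h1 h2 hp hq hr hu hs.
set D := r + 2 * q.
have hD : 0 < D by rewrite /D ltr_wpDr // mulr_ge0.
set t := r / D.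
have t0 : 0 < t by rewrite divr_gt0.
have tD : t * D = r by rewrite /t divfK // gt_eqF.
have t1 : t <= 1 by rewrite /t ler_pdivrMr // mul1r /D lerDl mulr_ge0.
have tq : t * q <= r / 2.
  have tD' := tD; rewrite /D mulrDr in tD'.
  have : t * (2 * q) = 2 * (t * q) by ring.
  have : 0 <= t * r by rewrite mulr_ge0 // ltW.
  lra.
have hc1 : cmb p q r <= t * p by rewrite /cmb ge_min lexx.
have hc2 : cmb p q r <= r / 2 by rewrite /cmb ge_min lexx orbT.
have e1 : cmb p q r * u <= t * p * u by rewrite ler_wpM2r.
have e2 : cmb p q r * s <= r / 2 * s by rewrite ler_wpM2r.
have e3 : t * Y <= Y by rewrite ler_piMl // ltW.
have e4 : t * (p * u - q * s) <= t * Y by rewrite ler_wpM2l // ltW.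
have e5 : t * q * s <= r / 2 * s by rewrite ler_wpM2r.
have : t * (p * u - q * s) = t * p * u - t * q * s by ring.
rewrite mulrDr.
lra.
Qed.

End Comb.


Section Main.
Variables (R : realType) (V : lmodType R[i]) (ip : V -> V -> R[i]).
Hypothesis Hip : is_inner_product ip.
Variables (v w : nat -> V) (N : nat).
Hypothesis Hv : forall i j, ip (v i) (v j) = (i == j)%:R.

Local Notation nsq := (nsq ip).

Let Honv n : forall i j, (i < n)%N -> (j < n)%N -> ip (v i) (v j) = (i == j)%:R.
Proof. by move=> i j _ _; exact: Hv. Qed.

Lemma coordv n (d : 'I_n -> R[i]) (k : 'I_n) : ip (\sum_(i < n) d i *: v i) (v k) = d k.
Proof. exact: (coord_on Hip (@Honv n)). Qed.

Lemma nsq_combv n (d : 'I_n -> R[i]) : nsq (\sum_(i < n) d i *: v i) = \sum_(i < n) csq (d i).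
Proof. exact: (nsq_comb Hip (@Honv n)). Qed.

Lemma besselv n f : \sum_(k < n) csq (ip f (v k)) <= nsq f.
Proof. exact: (bessel Hip (@Honv n)). Qed.

Lemma coordv_out n (d : 'I_n -> R[i]) k : (n <= k)%N -> ip (\sum_(i < n) d i *: v i) (v k) = 0.
Proof.
move=> hk; rewrite (ip_suml Hip) big1 // => i _; rewrite (ipZl Hip) Hv.
have : (i : nat) != k by apply/eqP => e; move: (ltn_ord i); rewrite e ltnNge hk.
by move/negbTE => ->; rewrite mulr0.
Qed.

Definition U (x : nat -> V) (j : nat) : V := if (j < N)%N then x j else v j.
Definition Sser (f : V) : \bar R := (\sum_(N <= j <oo) (csq (ip f (v j)))%:E)%E.
Definition Gm : 'M[R[i]]_N := \matrix_(j < N, i < N) ip (w j) (v i).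
Definition hvec (y : 'cV[R[i]]_N) : V := \sum_(i < N) conjc (y i 0) *: v i.
Definition Good (x : nat -> V) :=
  (forall (j k : 'I_N), ip (x j) (v k) = ip (w j) (v k)) /\
  (forall f (j : 'I_N), csq (ip f (x j)) <= nsq f).

Lemma hvec_coord y (k : 'I_N) : ip (hvec y) (v k) = conjc (y k 0).
Proof. exact: (coordv (fun i => conjc (y i 0))). Qed.

Lemma hvec_out y k : (N <= k)%N -> ip (hvec y) (v k) = 0.
Proof. exact: coordv_out. Qed.

Lemma hvec_x x y (j : 'I_N) : Good x -> ip (x j) (hvec y) = (Gm *m y) j 0.
Proof.
move=> [g1 _]; rewrite /hvec (ip_sumr Hip) mxE; apply: eq_bigr => i _.
by rewrite (ipZr Hip) conjcK g1 mxE mulrC.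
Qed.

Lemma hvec_nsq y : nsq (hvec y) = \sum_i csq (y i 0).
Proof. rewrite /hvec nsq_combv; apply: eq_bigr => i _; exact: csqJ. Qed.

Lemma hvec_orth y b : (forall k : 'I_N, ip b (v k) = 0) -> ip b (hvec y) = 0.
Proof.
move=> hb; rewrite /hvec (ip_sumr Hip) big1 // => i _.
by rewrite (ipZr Hip) hb mulr0.
Qed.

Lemma series_split x f :
  (\sum_(0 <= j <oo) (csq (ip f (U x j)))%:E)%E =
  ((\sum_(j < N) csq (ip f (x j)))%:E + Sser f)%E.
Proof.
rewrite (@nneseries_split _ _ 0 N); last by move=> k _; rewrite lee_fin csq_ge0.
rewrite add0n big_mkord sumEFin; congr (_%:E + _)%E.
  by apply: eq_bigr => j _; rewrite /U ltn_ord.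
apply: congr_lim; apply/funext => n; apply: eq_big_nat => j /andP[hj _].
by rewrite /U ltnNge hj.
Qed.

Lemma Sser_eq f g : (forall j, (N <= j)%N -> ip f (v j) = ip g (v j)) -> Sser f = Sser g.
Proof.
move=> h; apply: congr_lim; apply/funext => n; apply: eq_big_nat => j /andP[hj _].
by rewrite h.
Qed.

Lemma Sser0 f : (forall j, (N <= j)%N -> ip f (v j) = 0) -> Sser f = 0%E.
Proof. by move=> h; apply: eseries0 => j hj _; rewrite h // csq0. Qed.

Lemma Sser_ge0 f : (0 <= Sser f)%E.
Proof. by apply: nneseries_ge0 => j _ _; rewrite lee_fin csq_ge0. Qed.

Lemma Nec1 x : Good x -> riesz_basis ip (U x) -> forall y : 'cV[R[i]]_N, Gm *m y = 0 -> y = 0.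
Proof.
move=> gx [A [B [hA hAB hF hR]]] y hy.
have hx : forall j : 'I_N, ip (hvec y) (x j) = 0.
  by move=> j; apply: (ip_orth Hip); rewrite hvec_x // hy mxE.
have hS : Sser (hvec y) = 0%E by apply: Sser0 => k hk; exact: hvec_out.
have e0 : \sum_(j < N) csq (ip (hvec y) (x j)) = 0 by rewrite big1 // => j _; rewrite hx csq0.
have := (hF (hvec y)).1; rewrite series_split hS e0 adde0.
rewrite lee_fin pmulr_rle0 // => hn.
have h0 : hvec y = 0.
  by apply: (nsq_eq0 Hip); apply/eqP; rewrite eq_le hn (nsq_ge0 Hip).
apply/matrixP => i j; rewrite (ord1 j) mxE.
have := hvec_coord y i; rewrite h0 (ip0l Hip) => /esym/eqP.
by rewrite conjc_eq0 => /eqP.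
Qed.

Lemma Nec2 x : Good x -> Gm \in unitmx -> riesz_basis ip (U x) ->
  exists A0 B0 : R, [/\ 0 < A0, 0 <= B0 & forall b, (forall k : 'I_N, ip b (v k) = 0) ->
    ((A0 * nsq b)%:E <= Sser b)%E /\ (Sser b <= (B0 * nsq b)%:E)%E].
Proof.
move=> gx hu [A [B [hA hAB hF hR]]]; exists A, B; split => //.
  exact: le_trans (ltW hA) hAB.
move=> b hb; split; last first.
  apply: le_trans (hF b).2; rewrite series_split leeDr // lee_fin.
  by apply: sumr_ge0 => j _; exact: csq_ge0.
set e := \col_(j < N) (- ip (x j) b).
set y := invmx Gm *m e.
have hy : Gm *m y = e by rewrite /y mulKVmx.
set g := b + hvec y.
have hgx : forall j : 'I_N, ip g (x j) = 0.
  move=> j; apply: (ip_orth Hip); rewrite /g (ipDr Hip) hvec_x // hy mxE subrr //.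
have hSg : Sser g = Sser b.
  by apply: Sser_eq => k hk; rewrite /g (ipDl Hip) hvec_out // addr0.
have hng : nsq b <= nsq g.
  by rewrite /g (nsq_pyth Hip) ?hvec_orth // lerDl (nsq_ge0 Hip).
have e0 : \sum_(j < N) csq (ip g (x j)) = 0 by rewrite big1 // => j _; rewrite hgx csq0.
have := (hF g).1; rewrite series_split e0 hSg add0e.
apply: le_trans; rewrite lee_fin ler_wpM2l // ltW //.
Qed.

Lemma Frame x : Good x -> Gm \in unitmx ->
  (exists A0 B0 : R, [/\ 0 < A0, 0 <= B0 & forall b, (forall k : 'I_N, ip b (v k) = 0) ->
    ((A0 * nsq b)%:E <= Sser b)%E /\ (Sser b <= (B0 * nsq b)%:E)%E]) ->
  exists cl cu : R, 0 < cl /\ forall f,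
    ((cl * nsq f)%:E <= \sum_(0 <= j <oo) (csq (ip f (U x j)))%:E)%E /\
    (\sum_(0 <= j <oo) (csq (ip f (U x j)))%:E <= (cu * nsq f)%:E)%E.
Proof.
move=> gx hu [A0 [B0 [hA0 hB0 hS]]].
have [c2 [c20 hc2]] := Mlowc hu.
exists (cmb (c2 / 2) N%:R A0), (N%:R + B0); split.
  by apply: cmb_gt0; rewrite ?divr_gt0 ?ler0n.
move=> f.
set dv := \col_(i < N) conjc (ip f (v i)).
set a := hvec dv. set b := f - a.
have ha : forall k : 'I_N, ip a (v k) = ip f (v k).
  by move=> k; rewrite /a hvec_coord mxE conjcK.
have hb : forall k : 'I_N, ip b (v k) = 0.
  by move=> k; rewrite /b (ipBl Hip) ha subrr.
have hSf : Sser f = Sser b.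
  by apply: Sser_eq => k hk; rewrite /b (ipBl Hip) /a hvec_out // subr0.
have hnf : nsq f = nsq b + nsq a.
  by rewrite -(nsq_pyth Hip) ?hvec_orth // /b subrK.
have [hSl hSu] := hS b hb.
set X := \sum_(j < N) csq (ip f (x j)).
set Xa := \sum_(j < N) csq (ip a (x j)).
set Xb := \sum_(j < N) csq (ip b (x j)).
have hX0 : 0 <= X by apply: sumr_ge0 => j _; exact: csq_ge0.
have hXa : c2 * nsq a <= Xa.
  rewrite /a hvec_nsq; apply: le_trans (hc2 dv) _; rewrite le_eqVlt; apply/orP; left; apply/eqP.
  by apply: eq_bigr => j _; rewrite (ipC Hip (x j) (hvec dv)) csqJ hvec_x.
have hXb : Xb <= N%:R * nsq b.
  apply: (le_trans (ler_sum _ (fun j _ => gx.2 b j))).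
  by rewrite sumr_const card_ord mulr_natl.
have hXab : Xa <= 2 * X + 2 * Xb.
  rewrite /Xa /X /Xb !mulr_sumr -big_split ler_sum // => j _ /=.
  have e : ip a (x j) = ip f (x j) + - ip b (x j).
    by rewrite /b (ipBl Hip) opprB addrC subrK.
  by rewrite e; apply: le_trans (csqD2 _ _) _; rewrite csqN.
have na0 := nsq_ge0 Hip a. have nb0 := nsq_ge0 Hip b.
rewrite series_split hSf; split.
  apply: le_trans (leeD2l _ hSl); rewrite -EFinD lee_fin hnf addrC.
  apply: (comb (Y := X)) => //.
  - lra.
  - by rewrite addrC.
  - by rewrite divr_gt0.
have hXf : X <= N%:R * nsq f.
  apply: (le_trans (ler_sum _ (fun j _ => gx.2 f j))).
  by rewrite sumr_const card_ord mulr_natl.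
have hbf : B0 * nsq b <= B0 * nsq f by rewrite ler_wpM2l // hnf lerDl.
rewrite mulrDl EFinD; apply: leeD; first by rewrite lee_fin.
by apply: le_trans hSu _; rewrite lee_fin.
Qed.

Lemma RSeq x : Good x -> Gm \in unitmx -> exists cr cu : R, 0 < cr /\
  forall n (a : nat -> R[i]), (N <= n)%N ->
    cr * (\sum_(j < n) csq (a j)) <= nsq (\sum_(j < n) a j *: U x j) /\
    nsq (\sum_(j < n) a j *: U x j) <= cu * (\sum_(j < n) csq (a j)).
Proof.
move=> gx hu; have [c1 [c10 hc1]] := Mlow hu.
set K : R := 2 ^+ N.
have K0 : 0 <= K by rewrite exprn_ge0.
exists (cmb (1 / 2) K c1), (2 * K + 2); split; first by apply: cmb_gt0; rewrite ?divr_gt0.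
move=> n a hn.
have hnx : forall j : 'I_N, nsq (x j) <= 1.
  move=> j; have := gx.2 (x j) j; rewrite (ip_self Hip) /csq /=.
  have := nsq_ge0 Hip (x j); rewrite expr0n addr0 expr2 /=; nra.
set a2 := fun j : nat => if (j < N)%N then 0 else a j.
set y := \sum_(j < N) a j *: x j.
set z := \sum_(j < n) a2 j *: v j.
have hp : \sum_(j < n) a j *: U x j = y + z.
  apply/esym; rewrite /y (big_ord_widen n (fun j => a j *: x j) hn) big_mkcond /z -big_split /=.
  by apply: eq_bigr => j _; rewrite /U /a2; case: ifP => _; rewrite ?scale0r ?addr0 ?add0r.
set al := \sum_(j < N) csq (a j).
set be := \sum_(j < n) csq (a2 j).
have hs : \sum_(j < n) csq (a j) = al + be.
  apply/esym; rewrite /al (big_ord_widen n (fun j => csq (a j)) hn) big_mkcond /be -big_split /=.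
  by apply: eq_bigr => j _; rewrite /a2; case: ifP => _; rewrite ?csq0 ?addr0 ?add0r.
have al0 : 0 <= al by apply: sumr_ge0 => j _; exact: csq_ge0.
have be0 : 0 <= be by apply: sumr_ge0 => j _; exact: csq_ge0.
have hz : nsq z = be by rewrite /z nsq_combv.
have hy : nsq y <= K * al.
  rewrite /y; apply: le_trans (nsq_sum_le Hip _) _.
  rewrite ler_wpM2l // /al ler_sum // => j _; rewrite (nsqZ Hip).
  by rewrite ler_piMr ?csq_ge0.
rewrite hp hs; split; last first.
  apply: le_trans (nsqD2 Hip y z) _; rewrite hz.
  have := mulr_ge0 K0 be0; nra.
set p := y + z.
have hb := besselv n p.
have hcoord : forall k : 'I_n, ip p (v k) = ip y (v k) + a2 k.
  by move=> k; rewrite /p (ipDl Hip) /z coordv.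
set F := fun k : nat => csq (ip y (v k) + a2 k).
have hsplit : \sum_(k < n) csq (ip p (v k)) =
    \sum_(k < N) F k + \sum_(k < n) (if (k < N)%N then 0 else F k).
  apply/esym; rewrite (big_ord_widen n F hn) big_mkcond -big_split /=; apply: eq_bigr => k _.
  by rewrite hcoord /F; case: ifP => _; rewrite ?addr0 ?add0r.
have hfirst : c1 * al <= \sum_(k < N) F k.
  set arow := \row_(j < N) a j.
  have := hc1 arow.
  have -> : \sum_i csq (arow 0 i) = al by apply: eq_bigr => i _; rewrite mxE.
  move/le_trans; apply; rewrite le_eqVlt; apply/orP; left; apply/eqP; apply: eq_bigr => k _.
  rewrite /F /a2 ltn_ord addr0 /y (ip_suml Hip) mxE; congr csq; apply: eq_bigr => j _.
  by rewrite (ipZl Hip) gx.1 !mxE.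
set Y := \sum_(k < n) (if (k < N)%N then 0 else F k).
have Y0 : 0 <= Y.
  by apply: sumr_ge0 => k _; case: ifP => _ //; exact: csq_ge0.
have hY : 1 / 2 * be - K * al <= Y.
  have hterm : forall k : 'I_n,
      1 / 2 * csq (a2 k) - csq (ip y (v k)) <= (if (k < N)%N then 0 else F k).
    move=> k; rewrite /F /a2; case: ifP => _.
      by rewrite csq0 mulr0 sub0r oppr_le0 csq_ge0.
    have := csqD2 (ip y (v k) + a k) (- ip y (v k)).
    rewrite csqN addrAC subrr add0r; lra.
  apply: le_trans (ler_sum _ (fun k _ => hterm k)).
  rewrite sumrB -mulr_sumr.
  have := besselv n y; rewrite -/be; lra.
rewrite addrC; apply: (comb (Y := Y)) => //.
- by apply: le_trans hb; rewrite hsplit lerD2r.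
Qed.

Lemma Suff x : Good x -> Gm \in unitmx ->
  (exists A0 B0 : R, [/\ 0 < A0, 0 <= B0 & forall b, (forall k : 'I_N, ip b (v k) = 0) ->
    ((A0 * nsq b)%:E <= Sser b)%E /\ (Sser b <= (B0 * nsq b)%:E)%E]) ->
  riesz_basis ip (U x).
Proof.
move=> gx hu hS.
have [cl [cu [cl0 hF]]] := Frame gx hu hS.
have [cr [cu2 [cr0 hR]]] := RSeq gx hu.
exists (Num.min (Num.min cl cr) 1), (Num.max (Num.max cu cu2) 1); split.
- by rewrite !lt_min cl0 cr0 ltr01.
- by apply: (@le_trans _ _ 1); [rewrite ge_min lexx orbT | rewrite le_max lexx orbT].
- move=> f; have [h1 h2] := hF f; split.
    apply: le_trans h1; rewrite lee_fin ler_wpM2r ?(nsq_ge0 Hip) //.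
    by rewrite ge_min ge_min lexx.
  apply: le_trans h2 _; rewrite lee_fin ler_wpM2r ?(nsq_ge0 Hip) //.
  by rewrite le_max le_max lexx.
have key : forall n (a : nat -> R[i]), (N <= n)%N ->
    Num.min (Num.min cl cr) 1 * (\sum_(j < n) csq (a j)) <= nsq (\sum_(j < n) a j *: U x j) /\
    nsq (\sum_(j < n) a j *: U x j) <= Num.max (Num.max cu cu2) 1 * (\sum_(j < n) csq (a j)).
  move=> n a hn; have [h1 h2] := hR n a hn.
  have s0 : 0 <= \sum_(j < n) csq (a j) by apply: sumr_ge0 => j _; exact: csq_ge0.
  split.
    apply: le_trans h1; rewrite ler_wpM2r //.
    by rewrite ge_min ge_min lexx orbT.
  apply: le_trans h2 _; rewrite ler_wpM2r //.
  by rewrite le_max le_max lexx orbT.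
move=> n a; case: (leqP N n) => hn; first exact: key.
set a' := fun j : nat => if (j < n)%N then a j else 0.
have e1 : \sum_(j < n) a j *: U x j = \sum_(j < N) a' j *: U x j.
  rewrite (big_ord_widen N (fun j => a j *: U x j) (ltnW hn)) big_mkcond.
  by apply: eq_bigr => j _; rewrite /a'; case: ifP => _; rewrite ?scale0r.
have e2 : \sum_(j < n) csq (a j) = \sum_(j < N) csq (a' j).
  rewrite (big_ord_widen N (fun j => csq (a j)) (ltnW hn)) big_mkcond.
  by apply: eq_bigr => j _; rewrite /a'; case: ifP => _; rewrite ?csq0.
rewrite e1 e2; exact: key.
Qed.

Lemma CS f y : nsq y = 1 -> csq (ip f y) <= nsq f.
Proof.
move=> hy.
have Hon : forall i j, (i < 1)%N -> (j < 1)%N ->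
    ip ((fun _ : nat => y) i) ((fun _ : nat => y) j) = (i == j)%:R.
  move=> i j; rewrite !ltnS !leqn0 => /eqP -> /eqP ->.
  by rewrite (ip_self Hip) hy eqxx.
by have := bessel Hip Hon f; rewrite big_ord1.
Qed.

Lemma good_w : (forall j, nsq (w j) = 1) -> Good w.
Proof. by move=> Hw; split => // f j; exact: CS. Qed.

Lemma good_Pw : (forall j, nsq (w j) = 1) -> Good (fun j => proj_span ip v N (w j)).
Proof.
move=> Hw; split.
  by move=> j k; rewrite /proj_span; exact: (coordv (fun i => ip (w j) (v i))).
move=> f j.
have e : ip f (proj_span ip v N (w j)) = ip (proj_span ip v N f) (w j).
  rewrite /proj_span (ip_sumr Hip) (ip_suml Hip); apply: eq_bigr => i _.
  by rewrite (ipZr Hip) (ipZl Hip) (ipC Hip (w j) (v i)) mulrC.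
rewrite e; apply: le_trans (CS _ (Hw j)) _.
rewrite /proj_span nsq_combv; exact: besselv.
Qed.

End Main.


Unset Implicit Arguments.
Theorem mainTheorem4 (R : realType) (V : lmodType R[i]) (ip : V -> V -> R[i])
    (HH : hilbert_space ip) (v w : nat -> V)
    (Hv : orthonormal_basis ip v) (Hw : forall j : nat, hnorm ip (w j) = 1)
    (N : nat) (HN : (1 <= N)%N) :
  riesz_basis ip (BN v w N) <-> riesz_basis ip (BNt ip v w N).
Proof.
have [Hip _] := HH.
case: Hv => Hv1 _.
have Hw1 : forall j, nsq ip (w j) = 1.
  move=> j; have := Hw j; rewrite /hnorm => h.
  by rewrite -(sqr_sqrtr (nsq_ge0 Hip (w j))) h expr1n.
have gw : Good ip v w N w by exact: (good_w Hip v N Hw1).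
have gp : Good ip v w N (fun j => proj_span ip v N (w j)) by apply: (good_Pw Hip) => //; exact: Hv1.
split => H.
- have hu := inj_unit (Nec1 Hip Hv1 gw H).
  have hS := Nec2 Hip Hv1 gw hu H.
  exact: (Suff Hip Hv1 gp hu hS).
- have hu := inj_unit (Nec1 Hip Hv1 gp H).
  have hS := Nec2 Hip Hv1 gp hu H.
  exact: (Suff Hip Hv1 gw hu hS).
Qed.
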